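(* Let $N\in\mathbb N$, $\alpha,\beta>-1$, let $x_0<\dots<x_N$ be the JGL nodes with Lagrange basis $h_0,\dots,h_N$, and let $\mu\in(k-1,k)$ with $k\in\mathbb N$. Then $$ {}^R\hat{\mathbf D}^{(\mu)}=\breve{\mathbf D}^{(k)}\,\hat{\mathbf I}^{(k-\mu)}, $$ where $\breve{\mathbf D}^{(k)}_{ij}=(1+x)^\mu D^k\{(1+x)^{k-\mu}h_j(x)\}\big|_{x=x_i}$ for $0\le i,j\le N$. In particular, for $k=1$, $\breve{\mathbf D}^{(1)}=(1-\mu)\mathbf I_{N+1}+\operatorname{diag}(1+x_0,\dots,1+x_N)\,\mathbf D$, where $\mathbf D_{ij}=h_j'(x_i)$.
   Context: For $\rho>0$, $(I_-^\rho u)(x)=\frac{1}{\Gamma(\rho)}\int_{-1}^x (x-y)^{\rho-1}u(y)\,dy$, $D^k=d^k/dx^k$; for $\mu\in(k-1,k)$ the Riemann–Liouville derivative is ${}^R D_-^\mu u=D^k(I_-^{k-\mu}u)$. Modified operators: $\hat I_-^\mu u=(1+x)^{-\mu}I_-^\mu u$ and ${}^R\hat D_-^\mu u=(1+x)^{\mu}\,{}^R D_-^\mu u$; applied to polynomials these give polynomials, whose values at $x=-1$ are taken. The JGL nodes $x_0<\dots<x_N$ are the zeros of $(1-x^2)\frac{d}{dx}P_N^{(\alpha,\beta)}$ (Jacobi polynomial, Szegő normalization), and $h_j\in\mathcal P_N$ satisfies $h_j(x_i)=\delta_{ij}$. The matrices are ${}^R\hat{\mathbf D}^{(\mu)}_{ij}=({}^R\hat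 D_-^\mu h_j)(x_i)$ and $\hat{\mathbf I}^{(\nu)}_{ij}=(\hat I_-^\nu h_j)(x_i)$, $0\le i,j\le N$. *)

(* Defs.v *)
From Stdlib Require Import Reals Lra Lia List ClassicalEpsilon Factorial.
Open Scope R_scope.

Fixpoint prodR (f : nat -> R) (n : nat) : R :=
  match n with O => 1 | S n' => prodR f n' * f n' end.

Definition gbinom (a : R) (m : nat) : R :=
  prodR (fun i => a - INR i) m / INR (fact m).

(* Euler's Gamma function, via the Euler--Gauss limit
   Gamma(s) = lim_n n! n^s / (s (s+1) ... (s+n)) *)
Definition Gamma (s : R) : R :=
  epsilon (inhabits 0)
    (fun g => Un_cv (fun n => INR (fact n) * Rpower (INR n) s
                               / prodR (fun m => s + INR m) (S n)) g).

(* polynomial given by its coefficient list (constant term first) *)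
Definition peval (p : list R) (x : R) : R :=
  fold_right (fun c acc => c + x * acc) 0 p.

Definition deriv (f : R -> R) (x : R) : R :=
  epsilon (inhabits 0) (fun l => derivable_pt_lim f x l).
Fixpoint Dn (k : nat) (f : R -> R) : R -> R :=
  match k with O => f | S k' => deriv (Dn k' f) end.

Definition improper_int_upper (f : R -> R) (a b v : R) : Prop :=
  forall eps, eps > 0 -> exists delta, delta > 0 /\
    forall e, 0 < e < delta -> e < b - a ->
      exists pr : Riemann_integrable f a (b - e), Rabs (RiemannInt pr - v) < eps.

Definition RLint (rho : R) (u : R -> R) (x : R) : R :=
  epsilon (inhabits 0)
    (fun v => improper_int_upper (fun y => Rpower (x - y) (rho - 1) * u y) (-1) x v)
  / Gamma rho.

Definition RLder (mu : R) (k : nat) (u : R -> R) : R -> R :=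
  Dn k (RLint (INR k - mu) u).

Definition hatI (rho : R) (u : R -> R) (x : R) : R :=
  Rpower (1 + x) (- rho) * RLint rho u x.
Definition hatD (mu : R) (k : nat) (u : R -> R) (x : R) : R :=
  Rpower (1 + x) mu * RLder mu k u x.

(* value at x of "the polynomial" f, where f is a function that is a
   polynomial on (-1,1]; this gives the value at x = -1 by polynomial
   continuation, as in the paper. *)
Definition poly_val (f : R -> R) (x : R) : R :=
  peval (epsilon (inhabits nil)
           (fun p => forall y, -1 < y <= 1 -> peval p y = f y)) x.

(* Jacobi polynomial P_n^{(alpha,beta)}, Szego normalization (Szego 4.3.2) *)
Definition jacobiP (alpha beta : R) (n : nat) (x : R) : R :=
  sum_f_R0 (fun s => gbinom (INR n + alpha) (n - s) * gbinom (INR n + beta) s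
                     * ((x - 1) / 2) ^ s * ((x + 1) / 2) ^ (n - s)) n.

Definition is_JGL_node (alpha beta : R) (N : nat) (t : R) : Prop :=
  exists l, derivable_pt_lim (jacobiP alpha beta N) t l /\ (1 - t ^ 2) * l = 0.

(* the matrices (indices 0..N); x = nodes, h j = coefficient list of h_j *)
Definition hatDmat (mu : R) (k : nat) (x : nat -> R) (h : nat -> list R)
  (i j : nat) : R :=
  poly_val (hatD mu k (peval (h j))) (x i).
Definition hatImat (nu : R) (x : nat -> R) (h : nat -> list R) (i j : nat) : R :=
  poly_val (hatI nu (peval (h j))) (x i).
Definition breveDmat (mu : R) (k : nat) (x : nat -> R) (h : nat -> list R)
  (i j : nat) : R :=
  poly_val (fun t => Rpower (1 + t) mu
                     * Dn k (fun s => Rpower (1 + s) (INR k - mu) * peval (h j) s) t)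
           (x i).
Definition Dmat (x : nat -> R) (h : nat -> list R) (i j : nat) : R :=
  deriv (peval (h j)) (x i).

Definition kron (i j : nat) : R := if Nat.eqb i j then 1 else 0.

(* Main.v *)
Require Import Defs.
From Stdlib Require Import Reals List Lra Lia ClassicalEpsilon FunctionalExtensionality.
From Coquelicot Require Import Coquelicot.
Open Scope R_scope.

Fixpoint padd (p q : list R) : list R :=
  match p, q with
  | nil, _ => q
  | _, nil => p
  | a :: p', b :: q' => (a + b) :: padd p' q'
  end.
Definition pscale (c : R) (p : list R) := map (Rmult c) p.

Lemma peval_nil s : peval nil s = 0. Proof. reflexivity. Qed.
Lemma peval_cons a p s : peval (a :: p) s = a + s * peval p s. Proof. reflexivity. Qed.

Lemma peval_padd p q s : peval (padd p q) s = peval p s + peval q s.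
Proof.
  revert q; induction p as [|a p IH]; intros [|b q]; simpl; try ring.
  rewrite IH; simpl; ring.
Qed.
Lemma peval_pscale c p s : peval (pscale c p) s = c * peval p s.
Proof. unfold pscale; induction p as [|a p IH]; simpl; [ring|]. simpl in IH. rewrite IH; ring. Qed.
Lemma length_padd p q : length (padd p q) = Nat.max (length p) (length q).
Proof.
  revert q; induction p as [|a p IH]; intros [|b q]; simpl; auto.
Qed.
Lemma length_pscale c p : length (pscale c p) = length p.
Proof. apply length_map. Qed.

Lemma pshift p c : exists q, (length q <= length p)%nat /\
  forall z, peval q z = peval p (z + c).
Proof.
  induction p as [|a p IH].
  - exists nil; simpl; split; auto.
  - destruct IH as [q [Hl Hq]].
    exists (padd (a :: nil) (padd (pscale c q) (0 :: q))).
    split.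
    + rewrite !length_padd, length_pscale; simpl. rewrite Nat.max_r by lia. lia.
    + intro z. rewrite !peval_padd, peval_pscale, !peval_cons, Hq. simpl. ring.
Qed.

Lemma pdiv p r : exists q, (length q <= pred (length p))%nat /\
  forall s, peval p s - peval p r = (s - r) * peval q s.
Proof.
  induction p as [|a p IH].
  - exists nil; simpl; split; auto. intros; ring.
  - destruct IH as [q [Hl Hq]].
    exists (padd p (pscale r q)). split.
    + rewrite length_padd, length_pscale. simpl. lia.
    + intro s. rewrite peval_padd, peval_pscale, !peval_cons.
      replace (a + s * peval p s - (a + r * peval p r)) with
        ((s - r) * peval p s + r * (peval p s - peval p r)) by ring.
      rewrite Hq. ring.
Qed.

Lemma pzero n : forall p (r : nat -> R), (length p <= n)%nat ->
  (forall i j, (i < n)%nat -> (j < n)%nat -> i <> j -> r i <> r j) ->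
  (forall i, (i < n)%nat -> peval p (r i) = 0) -> forall s, peval p s = 0.
Proof.
  induction n as [|n IH]; intros p r Hl Hd Hz s.
  - destruct p; simpl in *; [reflexivity | lia].
  - destruct (pdiv p (r n)) as [q [Hql Hq]].
    assert (Hq0 : forall s, peval q s = 0).
    { apply (IH q r).
      - lia.
      - intros; apply Hd; lia.
      - intros i Hi. specialize (Hq (r i)). rewrite Hz in Hq by lia.
        rewrite Hz in Hq by lia.
        assert (r i - r n <> 0) by (intro E; apply (Hd i n); try lia; lra).
        apply (Rmult_eq_reg_l (r i - r n)); auto. lra. }
    specialize (Hq s). rewrite Hq0, Hz in Hq by lia. lra.
Qed.

Definition ispoly (f : R -> R) := exists p, forall s, f s = peval p s.

Lemma poly_const c : ispoly (fun _ => c).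
Proof. exists (c :: nil); intro; simpl; ring. Qed.
Lemma poly_peval p : ispoly (peval p).
Proof. exists p; auto. Qed.
Lemma poly_plus f g : ispoly f -> ispoly g -> ispoly (fun s => f s + g s).
Proof. intros [p Hp] [q Hq]; exists (padd p q); intro; rewrite peval_padd, Hp, Hq; auto. Qed.
Lemma poly_scal c f : ispoly f -> ispoly (fun s => c * f s).
Proof. intros [p Hp]; exists (pscale c p); intro; rewrite peval_pscale, Hp; auto. Qed.
Lemma poly_X f : ispoly f -> ispoly (fun s => s * f s).
Proof. intros [p Hp]; exists (0 :: p); intro; rewrite peval_cons, Hp; ring. Qed.
Lemma poly_ext f g : (forall s, f s = g s) -> ispoly f -> ispoly g.
Proof. intros H [p Hp]; exists p; intro; rewrite <- H; auto. Qed.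

Lemma poly_id_strong p : (forall y, -1 < y <= 1 -> peval p y = 0) -> forall s, peval p s = 0.
Proof.
  intros H. apply (pzero (length p) p (fun i => / INR (S i))); auto.
  - intros i j _ _ Hij E. apply Hij.
    assert (INR (S i) = INR (S j)).
    { rewrite <- (Rinv_inv (INR (S i))), <- (Rinv_inv (INR (S j))), E; auto. }
    apply INR_eq in H0. lia.
  - intros i _. apply H.
    assert (1 <= INR (S i)) by (rewrite S_INR; pose proof (pos_INR i); lra).
    split.
    + assert (0 < / INR (S i)) by (apply Rinv_0_lt_compat; lra). lra.
    + rewrite <- Rinv_1. apply Rinv_le_contravar; lra.
Qed.

Lemma poly_val_eq f g : ispoly g -> (forall y, -1 < y <= 1 -> f y = g y) ->
  forall z, poly_val f z = g z.
Proof.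
  intros [q Hq] H z. unfold poly_val.
  set (P := fun p : list R => forall y, -1 < y <= 1 -> peval p y = f y).
  assert (E : exists p, P p) by (exists q; intros y Hy; rewrite H, Hq; auto).
  pose proof (epsilon_spec (inhabits nil) P E) as Hs.
  set (p' := epsilon (inhabits nil) P) in *.
  rewrite Hq.
  assert (Hz : forall s, peval (padd p' (pscale (-1) q)) s = 0).
  { apply poly_id_strong. intros y Hy. rewrite peval_padd, peval_pscale, (Hs y Hy), H, Hq by auto. ring. }
  specialize (Hz z). rewrite peval_padd, peval_pscale in Hz. lra.
Qed.

Lemma deriv_eq f s l : derivable_pt_lim f s l -> deriv f s = l.
Proof.
  intro H. unfold deriv.
  apply (uniqueness_limite f s).
  - apply (epsilon_spec (inhabits 0) (fun l => derivable_pt_lim f s l)). eauto.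
  - auto.
Qed.

Lemma poly_der f : ispoly f -> exists f', ispoly f' /\ forall s, derivable_pt_lim f s (f' s).
Proof.
  intros [p Hp].
  assert (E : f = peval p) by (apply functional_extensionality; auto). subst f. clear Hp.
  induction p as [|a p IH].
  - exists (fun _ => 0). split; [apply poly_const|]. intro s. simpl.
    apply derivable_pt_lim_const.
  - destruct IH as [g [Hg Hd]].
    exists (fun s => peval p s + s * g s). split.
    + apply poly_plus; [apply poly_peval| apply poly_X; auto].
    + intro s. simpl.
      assert (H1 := derivable_pt_lim_plus (fun _ => a) (fun s => s * peval p s) s 0 (peval p s + s * g s)
        (derivable_pt_lim_const a s)).
      replace (peval p s + s * g s) with (0 + (peval p s + s * g s)) by ring.
      apply H1.
      replace (peval p s + s * g s) with (1 * peval p s + s * g s) by ring.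
      apply (derivable_pt_lim_mult id (peval p) s 1 (g s)); auto.
      apply derivable_pt_lim_id.
Qed.

Lemma poly_deriv f : ispoly f -> ispoly (deriv f) /\ forall s, derivable_pt_lim f s (deriv f s).
Proof.
  intro H. destruct (poly_der f H) as [g [Hg Hd]].
  assert (E : deriv f = g) by (apply functional_extensionality; intro; apply deriv_eq; auto).
  rewrite E; auto.
Qed.

Definition Tf (b : R) (f : R -> R) (s : R) := b * f s + (1 + s) * deriv f s.

Lemma poly_Tf b f : ispoly f -> ispoly (Tf b f).
Proof.
  intro H. destruct (poly_deriv f H) as [H1 _]. unfold Tf.
  apply poly_plus; [apply poly_scal; auto|].
  apply (poly_ext (fun s => deriv f s + s * deriv f s)); [intro; ring|].
  apply poly_plus; auto; apply poly_X; auto.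
Qed.

Fixpoint Titer (k : nat) (b : R) (f : R -> R) : R -> R :=
  match k with O => f | S k' => Tf (b - INR k') (Titer k' b f) end.

Lemma poly_Titer k b f : ispoly f -> ispoly (Titer k b f).
Proof. induction k; simpl; auto. intro; apply poly_Tf; auto. Qed.

Lemma loc_der f g s l : (forall y, -1 < y -> f y = g y) -> -1 < s ->
  derivable_pt_lim g s l -> derivable_pt_lim f s l.
Proof.
  intros E Hs H eps Heps. destruct (H eps Heps) as [d Hd].
  assert (Hp : 0 < Rmin d (s + 1)) by (apply Rmin_pos; [apply (cond_pos d)|lra]).
  exists (mkposreal _ Hp). intros h Hh0 Hh. simpl in Hh.
  rewrite !E.
  - apply Hd; auto. apply Rlt_le_trans with (1 := Hh), Rmin_l.
  - lra.
  - assert (Rabs h < s + 1) by (apply Rlt_le_trans with (1 := Hh), Rmin_r).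
    apply Rabs_def2 in H0. lra.
Qed.

Lemma Rpower_pos a b : 0 < Rpower a b.
Proof. unfold Rpower; apply exp_pos. Qed.

Lemma der_G c f s : ispoly f -> -1 < s ->
  derivable_pt_lim (fun y => Rpower (1 + y) c * f y) s
     (Rpower (1 + s) (c - 1) * Tf c f s).
Proof.
  intros Hf Hs. destruct (poly_deriv f Hf) as [_ Hd].
  assert (H1 : derivable_pt_lim (fun y => Rpower (1 + y) c) s (c * Rpower (1 + s) (c - 1))).
  { assert (H := derivable_pt_lim_comp (fun y => 1 + y) (fun z => Rpower z c) s 1
       (c * Rpower (1 + s) (c - 1))).
    replace (c * Rpower (1 + s) (c - 1)) with (c * Rpower (1 + s) (c - 1) * 1) by ring.
    apply H.
    - pose proof (derivable_pt_lim_plus (fun _ => 1) id s 0 1 (derivable_pt_lim_const 1 s) (derivable_pt_lim_id s)) as A.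
      rewrite Rplus_0_l in A. exact A.
    - apply derivable_pt_lim_power. lra. }
  assert (H2 := derivable_pt_lim_mult _ _ s _ _ H1 (Hd s)).
  unfold mult_real_fct in H2.
  assert (E : Rpower (1 + s) c = Rpower (1 + s) (c - 1) * (1 + s)).
  { replace c with ((c - 1) + 1) at 1 by ring. rewrite Rpower_plus, Rpower_1; auto; lra. }
  replace (Rpower (1 + s) (c - 1) * Tf c f s) with
    (c * Rpower (1 + s) (c - 1) * f s + Rpower (1 + s) c * deriv f s)
    by (rewrite E; unfold Tf; ring).
  exact H2.
Qed.

Lemma Dn_G k b f g : ispoly f -> (forall s, -1 < s -> g s = Rpower (1 + s) b * f s) ->
  forall s, -1 < s -> Dn k g s = Rpower (1 + s) (b - INR k) * Titer k b f s.
Proof.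
  intros Hf Hg. induction k as [|k IH]; intros s Hs.
  - simpl. rewrite Hg by auto. f_equal. f_equal. ring.
  - change (Dn (S k) g s) with (deriv (Dn k g) s).
    change (Titer (S k) b f) with (Tf (b - INR k) (Titer k b f)). apply deriv_eq.
    apply (loc_der _ (fun y => Rpower (1 + y) (b - INR k) * Titer k b f y)); auto.
    replace (b - INR (S k)) with (b - INR k - 1) by (rewrite S_INR; ring).
    apply der_G; auto. apply poly_Titer; auto.
Qed.

Lemma der_sum (c : nat -> R) (g : nat -> R -> R) n s :
  (forall l, ispoly (g l)) ->
  derivable_pt_lim (fun y => sum_f_R0 (fun l => c l * g l y) n) s
     (sum_f_R0 (fun l => c l * deriv (g l) s) n).
Proof.
  intro Hg. induction n as [|n IH]; simpl.
  - apply derivable_pt_lim_scal. apply poly_deriv; auto.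
  - apply (derivable_pt_lim_plus (fun y => sum_f_R0 (fun l => c l * g l y) n)
       (fun y => c (S n) * g (S n) y)); auto.
    apply derivable_pt_lim_scal. apply poly_deriv; auto.
Qed.

Lemma Tf_sum a (c : nat -> R) (g : nat -> R -> R) n :
  (forall l, ispoly (g l)) ->
  Tf a (fun y => sum_f_R0 (fun l => c l * g l y) n) =
  fun y => sum_f_R0 (fun l => c l * Tf a (g l) y) n.
Proof.
  intro Hg. apply functional_extensionality. intro s. unfold Tf.
  rewrite (deriv_eq _ _ _ (der_sum c g n s Hg)).
  induction n as [|n IH]; simpl; [ring|]. rewrite <- IH. ring.
Qed.

Lemma Titer_sum k b (c : nat -> R) (g : nat -> R -> R) n :
  (forall l, ispoly (g l)) ->
  Titer k b (fun y => sum_f_R0 (fun l => c l * g l y) n) =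
  fun y => sum_f_R0 (fun l => c l * Titer k b (g l) y) n.
Proof.
  intro Hg. induction k as [|k IH]; simpl; auto.
  rewrite IH. apply Tf_sum. intro; apply poly_Titer; auto.
Qed.

Definition Imp (f : R -> R) (a b v : R) : Prop :=
  forall eps, eps > 0 -> exists delta, delta > 0 /\
    forall e, 0 < e < delta -> e < b - a ->
      exists w, is_RInt f a (b - e) w /\ Rabs (w - v) < eps.

Lemma Imp_improper f a b v : Imp f a b v -> improper_int_upper f a b v.
Proof.
  intros H eps Heps. destruct (H eps Heps) as [d [Hd H1]].
  exists d; split; auto. intros e He1 He2.
  destruct (H1 e He1 He2) as [w [Hw Hv]].
  assert (pr : Riemann_integrable f a (b - e)) by (apply ex_RInt_Reals_0; exists w; auto).
  exists pr. rewrite <- RInt_Reals, (is_RInt_unique _ _ _ _ Hw). auto.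
Qed.

Lemma improper_unique f a b v1 v2 : a < b ->
  improper_int_upper f a b v1 -> improper_int_upper f a b v2 -> v1 = v2.
Proof.
  intros Hab H1 H2.
  apply Rminus_diag_uniq. apply Rabs_eq_0.
  apply Rle_antisym; [|apply Rabs_pos].
  apply Rnot_lt_le. intro Hpos.
  set (eps := Rabs (v1 - v2) / 2).
  assert (Heps : eps > 0) by (unfold eps; lra).
  destruct (H1 eps Heps) as [d1 [Hd1 K1]].
  destruct (H2 eps Heps) as [d2 [Hd2 K2]].
  set (e := Rmin (Rmin d1 d2) (b - a) / 2).
  assert (Hm : 0 < Rmin (Rmin d1 d2) (b - a)) by (repeat apply Rmin_pos; lra).
  assert (He : 0 < e) by (unfold e; lra).
  assert (Hm1 := Rmin_l (Rmin d1 d2) (b - a)). assert (Hm2 := Rmin_r (Rmin d1 d2) (b - a)).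
  assert (Hm3 := Rmin_l d1 d2). assert (Hm4 := Rmin_r d1 d2).
  destruct (K1 e) as [pr1 E1]; [unfold e; lra | unfold e; lra |].
  destruct (K2 e) as [pr2 E2]; [unfold e; lra | unfold e; lra |].
  rewrite (RiemannInt_P5 pr1 pr2) in E1.
  assert (Rabs (v1 - v2) <= Rabs (RiemannInt pr2 - v1) + Rabs (RiemannInt pr2 - v2)).
  { replace (v1 - v2) with (-(RiemannInt pr2 - v1) + (RiemannInt pr2 - v2)) by ring.
    eapply Rle_trans; [apply Rabs_triang|]. rewrite Rabs_Ropp. lra. }
  unfold eps in *. lra.
Qed.

Lemma Imp_ext f g a b v : (forall y, a <= y < b -> f y = g y) -> Imp f a b v -> Imp g a b v.
Proof.
  intros E H eps Heps. destruct (H eps Heps) as [d [Hd K]].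
  exists d; split; auto. intros e He1 He2. destruct (K e He1 He2) as [w [Hw Hv]].
  exists w; split; auto. apply (is_RInt_ext f); auto.
  intros y Hy. rewrite Rmin_left in Hy by lra. rewrite Rmax_right in Hy by lra.
  apply E; lra.
Qed.

Lemma Imp_plus f g a b v1 v2 : Imp f a b v1 -> Imp g a b v2 ->
  Imp (fun y => f y + g y) a b (v1 + v2).
Proof.
  intros H1 H2 eps Heps.
  destruct (H1 (eps/2)) as [d1 [Hd1 K1]]; [lra|].
  destruct (H2 (eps/2)) as [d2 [Hd2 K2]]; [lra|].
  exists (Rmin d1 d2); split; [apply Rmin_pos; lra|].
  intros e He1 He2.
  assert (Hm3 := Rmin_l d1 d2). assert (Hm4 := Rmin_r d1 d2).
  destruct (K1 e) as [w1 [Hw1 Hv1]]; [lra|lra|].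
  destruct (K2 e) as [w2 [Hw2 Hv2]]; [lra|lra|].
  exists (w1 + w2); split.
  - exact (is_RInt_plus _ _ _ _ _ _ Hw1 Hw2).
  - replace (w1 + w2 - (v1 + v2)) with ((w1 - v1) + (w2 - v2)) by ring.
    eapply Rle_lt_trans; [apply Rabs_triang|]. lra.
Qed.

Lemma Imp_scal c f a b v : Imp f a b v -> Imp (fun y => c * f y) a b (c * v).
Proof.
  intros H eps Heps.
  destruct (H (eps / (Rabs c + 1))) as [d [Hd K]].
  { apply Rdiv_lt_0_compat; [lra|]. pose proof (Rabs_pos c); lra. }
  exists d; split; auto. intros e He1 He2. destruct (K e He1 He2) as [w [Hw Hv]].
  exists (c * w); split.
  - exact (is_RInt_scal _ _ _ _ _ Hw).
  - replace (c * w - c * v) with (c * (w - v)) by ring. rewrite Rabs_mult.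
    pose proof (Rabs_pos c). pose proof (Rabs_pos (w - v)).
    apply Rle_lt_trans with ((Rabs c + 1) * Rabs (w - v)); [nra|].
    apply Rmult_lt_compat_l with (r := Rabs c + 1) in Hv; [|lra].
    replace ((Rabs c + 1) * (eps / (Rabs c + 1))) with eps in Hv by (field; lra). lra.
Qed.

Lemma der_pow_sub x r y : y < x ->
  derivable_pt_lim (fun z => Rpower (x - z) r) y (- (r * Rpower (x - y) (r - 1))).
Proof.
  intro Hy.
  assert (H := derivable_pt_lim_comp (fun z => x - z) (fun z => Rpower z r) y (-1)
       (r * Rpower (x - y) (r - 1))).
  replace (- (r * Rpower (x - y) (r - 1))) with (r * Rpower (x - y) (r - 1) * -1) by ring.
  apply H.
  - pose proof (derivable_pt_lim_minus (fun _ => x) id y 0 1 (derivable_pt_lim_const x y) (derivable_pt_lim_id y)) as A.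
    rewrite Rminus_0_l in A. exact A.
  - apply derivable_pt_lim_power. lra.
Qed.

Lemma Imp_base r x : 0 < r -> -1 < x ->
  Imp (fun y => Rpower (x - y) (r - 1)) (-1) x (Rpower (1 + x) r / r).
Proof.
  intros Hr Hx eps Heps.
  set (d := Rpower (eps * r) (/ r)).
  exists d; split; [apply Rpower_pos|].
  intros e He1 He2.
  exists ((Rpower (1 + x) r - Rpower e r) / r). split.
  - set (F := fun y => - Rpower (x - y) r / r).
    replace ((Rpower (1 + x) r - Rpower e r) / r) with (minus (F (x - e)) (F (-1))).
    + apply (@is_RInt_derive R_CompleteNormedModule F).
      * intros y Hy. rewrite Rmin_left in Hy by lra. rewrite Rmax_right in Hy by lra.
        apply is_derive_Reals. unfold F.
        assert (D : derivable_pt_lim (fun y => / r * - Rpower (x - y) r) y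
                       (/ r * - (- (r * Rpower (x - y) (r - 1))))).
        { apply (derivable_pt_lim_scal (fun y => - Rpower (x - y) r)).
          apply (derivable_pt_lim_opp (fun y => Rpower (x - y) r)). apply der_pow_sub. lra. }
        replace (fun y => - Rpower (x - y) r / r) with (fun y => / r * - Rpower (x - y) r)
          by (apply functional_extensionality; intro; unfold Rdiv; ring).
        replace (Rpower (x - y) (r - 1)) with (/ r * - (- (r * Rpower (x - y) (r - 1)))) at 1
          by (field; lra).
        exact D.
      * intros y Hy. rewrite Rmin_left in Hy by lra. rewrite Rmax_right in Hy by lra.
        apply (@ex_derive_continuous R_AbsRing R_NormedModule). apply ex_derive_Reals_1.
        exists (- ((r - 1) * Rpower (x - y) (r - 1 - 1))). apply der_pow_sub. lra.
    + unfold F, minus, plus, opp; simpl. replace (x - (x - e)) with e by ring.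
      replace (x - -1) with (1 + x) by ring. field. lra.
  - replace ((Rpower (1 + x) r - Rpower e r) / r - Rpower (1 + x) r / r) with
      (- (Rpower e r / r)) by (field; lra).
    rewrite Rabs_Ropp, Rabs_right.
    2: { apply Rle_ge, Rlt_le, Rdiv_lt_0_compat; auto; apply Rpower_pos. }
    apply (Rmult_lt_reg_r r); auto. unfold Rdiv. rewrite Rmult_assoc, Rinv_l, Rmult_1_r by lra.
    assert (Rpower e r < Rpower d r) by (apply Rlt_Rpower_l; lra).
    unfold d in H. rewrite Rpower_mult, Rinv_l, Rpower_1 in H by nra. lra.
Qed.

Lemma Imp_main b : forall r, 0 < r -> exists w, (length w <= length b)%nat /\
  forall x, -1 < x ->
   Imp (fun y => Rpower (x - y) (r - 1) * peval b (1 + y)) (-1) x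
       (Rpower (1 + x) r * peval w (1 + x)).
Proof.
  induction b as [|d b IH]; intros r Hr.
  - exists nil. split; [simpl; lia|]. intros x Hx.
    apply (Imp_ext (fun y => 0 * Rpower (x - y) (r - 1))).
    + intros; simpl; ring.
    + replace (Rpower (1 + x) r * peval nil (1 + x)) with (0 * (Rpower (1 + x) r / r))
        by (simpl; ring).
      apply Imp_scal, Imp_base; auto.
  - destruct (IH r Hr) as [w1 [L1 H1]].
    destruct (IH (r + 1)) as [w2 [L2 H2]]; [lra|].
    exists ((d / r) :: padd w1 (pscale (-1) w2)). split.
    + simpl. rewrite length_padd, length_pscale. lia.
    + intros x Hx.
      assert (Hs := Imp_plus _ _ _ _ _ _
        (Imp_plus _ _ _ _ _ _ (Imp_scal d _ _ _ _ (Imp_base r x Hr Hx))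
                              (Imp_scal (1 + x) _ _ _ _ (H1 x Hx)))
        (Imp_scal (-1) _ _ _ _ (H2 x Hx))).
      replace (Rpower (1 + x) r * peval (d / r :: padd w1 (pscale (-1) w2)) (1 + x)) with
        (d * (Rpower (1 + x) r / r) + (1 + x) * (Rpower (1 + x) r * peval w1 (1 + x)) +
         -1 * (Rpower (1 + x) (r + 1) * peval w2 (1 + x))).
      2: { rewrite Rpower_plus, Rpower_1 by lra. rewrite peval_cons, peval_padd, peval_pscale.
           field. lra. }
      revert Hs. apply Imp_ext. intros y Hy.
      replace (r + 1 - 1) with ((r - 1) + 1) by ring.
      rewrite Rpower_plus, Rpower_1 by lra. rewrite peval_cons. ring.
Qed.

Lemma RLint_poly p r : 0 < r -> exists Q, (length Q <= length p)%nat /\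
  forall x, -1 < x -> RLint r (peval p) x = Rpower (1 + x) r * peval Q x.
Proof.
  intro Hr.
  destruct (pshift p (-1)) as [b [Lb Hb]].
  destruct (Imp_main b r Hr) as [w [Lw Hw]].
  destruct (pshift w 1) as [Q0 [LQ HQ]].
  exists (pscale (/ Gamma r) Q0). split; [rewrite length_pscale; lia|].
  intros x Hx. unfold RLint.
  set (P := fun v => improper_int_upper (fun y => Rpower (x - y) (r - 1) * peval p y) (-1) x v).
  assert (HI : P (Rpower (1 + x) r * peval w (1 + x))).
  { unfold P. apply Imp_improper.
    apply (Imp_ext (fun y => Rpower (x - y) (r - 1) * peval b (1 + y))); [|apply Hw; auto].
    intros y _. rewrite Hb. f_equal. f_equal. ring. }
  assert (HE := epsilon_spec (inhabits 0) P (ex_intro _ _ HI)).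
  rewrite (improper_unique _ (-1) x _ _ ltac:(lra) HE HI).
  rewrite peval_pscale, HQ. replace (x + 1) with (1 + x) by ring. unfold Rdiv. ring.
Qed.

Fixpoint lsum (c : nat -> R) (h : nat -> list R) (n : nat) : list R :=
  match n with
  | O => pscale (c O) (h O)
  | S n' => padd (lsum c h n') (pscale (c (S n')) (h (S n')))
  end.

Lemma lsum_spec c h n s : peval (lsum c h n) s = sum_f_R0 (fun l => c l * peval (h l) s) n.
Proof. induction n; simpl; rewrite ?peval_padd, peval_pscale; [|rewrite IHn]; auto. Qed.

Lemma lsum_len c h n m : (forall l, (l <= n)%nat -> (length (h l) <= m)%nat) ->
  (length (lsum c h n) <= m)%nat.
Proof.
  intro H. induction n; simpl.
  - rewrite length_pscale; apply H; lia.
  - rewrite length_padd, length_pscale.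
    assert (length (lsum c h n) <= m)%nat by (apply IHn; intros; apply H; lia).
    assert (length (h (S n)) <= m)%nat by (apply H; lia). lia.
Qed.

Lemma kron_sum (c : nat -> R) n i : (i <= n)%nat ->
  sum_f_R0 (fun l => c l * kron i l) n = c i.
Proof.
  induction n as [|n IH]; intro Hi.
  - assert (i = 0%nat) by lia. subst. simpl. unfold kron. simpl. ring.
  - simpl. destruct (Nat.eq_dec i (S n)) as [E|E].
    + subst. unfold kron at 2. rewrite Nat.eqb_refl.
      assert (sum_f_R0 (fun l => c l * kron (S n) l) n = 0).
      { clear IH Hi. assert (forall m, (m <= n)%nat -> sum_f_R0 (fun l => c l * kron (S n) l) m = 0).
        { induction m; intro Hm; simpl.
          - unfold kron. simpl. ring.
          - rewrite IHm by lia. unfold kron. replace (Nat.eqb (S n) (S m)) with false.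
            ring. symmetry. apply Nat.eqb_neq. lia. }
        apply H; lia. }
      rewrite H. ring.
    + rewrite IH by lia. unfold kron at 1. replace (Nat.eqb i (S n)) with false.
      ring. symmetry. apply Nat.eqb_neq. auto.
Qed.

Lemma incr_lt (x : nat -> R) N : (forall i, (i < N)%nat -> x i < x (S i)) ->
  forall i j, (i < j)%nat -> (j <= N)%nat -> x i < x j.
Proof.
  intros H i j Hij. induction j as [|j IH]; [lia|]. intro Hj.
  destruct (Nat.eq_dec i j) as [E|E].
  - subst. apply H; lia.
  - apply Rlt_trans with (x j); [apply IH; lia | apply H; lia].
Qed.

Lemma lagrange N (x : nat -> R) (h : nat -> list R) :
  (forall i, (i < N)%nat -> x i < x (S i)) ->
  (forall j, (j <= N)%nat -> (length (h j) <= S N)%nat) ->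
  (forall i j, (i <= N)%nat -> (j <= N)%nat -> peval (h j) (x i) = kron i j) ->
  forall Q, (length Q <= S N)%nat ->
  forall s, peval Q s = sum_f_R0 (fun l => peval Q (x l) * peval (h l) s) N.
Proof.
  intros Hx Hl Hk Q HQ s.
  set (c := fun l => peval Q (x l)).
  set (D := padd Q (pscale (-1) (lsum c h N))).
  assert (HD : forall s, peval D s = 0).
  { apply (pzero (S N) D x).
    - unfold D. rewrite length_padd, length_pscale.
      assert (length (lsum c h N) <= S N)%nat by (apply lsum_len; auto). lia.
    - intros i j Hi Hj Hij E.
      destruct (Nat.lt_total i j) as [L|[L|L]]; [|lia|].
      + assert (x i < x j) by (apply (incr_lt x N); auto; lia). lra.
      + assert (x j < x i) by (apply (incr_lt x N); auto; lia). lra.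
    - intros i Hi. unfold D. rewrite peval_padd, peval_pscale, lsum_spec.
      rewrite (sum_eq _ (fun l => c l * kron i l)).
      + rewrite kron_sum by lia. unfold c. ring.
      + intros l Hl'. rewrite Hk by lia. auto. }
  specialize (HD s). unfold D in HD. rewrite peval_padd, peval_pscale, lsum_spec in HD.
  unfold c in HD. lra.
Qed.

Lemma hatI_eq r p Q y : -1 < y ->
  (forall x, -1 < x -> RLint r (peval p) x = Rpower (1 + x) r * peval Q x) ->
  hatI r (peval p) y = peval Q y.
Proof.
  intros Hy H. unfold hatI. rewrite H by auto.
  rewrite <- Rmult_assoc, <- Rpower_plus. replace (- r + r) with 0 by ring.
  rewrite Rpower_O by lra. ring.
Qed.

Theorem theorem3p3 (N : nat) (alpha beta : R) (x : nat -> R) (h : nat -> list R)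
  (mu : R) (k : nat) :
  alpha > -1 -> beta > -1 ->
  (forall i, (i < N)%nat -> x i < x (S i)) ->
  (forall t, is_JGL_node alpha beta N t <-> exists i, (i <= N)%nat /\ x i = t) ->
  (forall j, (j <= N)%nat -> (length (h j) <= S N)%nat) ->
  (forall i j, (i <= N)%nat -> (j <= N)%nat -> peval (h j) (x i) = kron i j) ->
  INR k - 1 < mu < INR k ->
  (forall i j, (i <= N)%nat -> (j <= N)%nat ->
     hatDmat mu k x h i j
     = sum_f_R0 (fun l => breveDmat mu k x h i l * hatImat (INR k - mu) x h l j) N)
  /\
  (k = 1%nat ->
   forall i j, (i <= N)%nat -> (j <= N)%nat ->
     breveDmat mu k x h i j = (1 - mu) * kron i j + (1 + x i) * Dmat x h i j).
Proof.
  intros _ _ Hx _ Hl Hk Hmu.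
  assert (Hbr : forall i l, breveDmat mu k x h i l = Titer k (INR k - mu) (peval (h l)) (x i)).
  { intros i l. unfold breveDmat. apply poly_val_eq.
    - apply poly_Titer, poly_peval.
    - intros y Hy.
      rewrite (Dn_G k (INR k - mu) (peval (h l)) _ (poly_peval _) (fun s _ => eq_refl)) by lra.
      rewrite <- Rmult_assoc, <- Rpower_plus.
      replace (mu + (INR k - mu - INR k)) with 0 by ring. rewrite Rpower_O by lra. ring. }
  split.
  - intros i j Hi Hj.
    destruct (RLint_poly (h j) (INR k - mu)) as [Q [LQ HQ]]; [lra|].
    assert (HI : forall l, hatImat (INR k - mu) x h l j = peval Q (x l)).
    { intro l. unfold hatImat. apply poly_val_eq; [apply poly_peval|].
      intros y Hy. apply hatI_eq; auto. lra. }
    assert (HD : hatDmat mu k x h i j = Titer k (INR k - mu) (peval Q) (x i)).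
    { unfold hatDmat. apply poly_val_eq; [apply poly_Titer, poly_peval|].
      intros y Hy. unfold hatD, RLder.
      rewrite (Dn_G k (INR k - mu) (peval Q) _ (poly_peval _) (fun s Hs => HQ s Hs)) by lra.
      rewrite <- Rmult_assoc, <- Rpower_plus.
      replace (mu + (INR k - mu - INR k)) with 0 by ring. rewrite Rpower_O by lra. ring. }
    rewrite HD.
    assert (E : peval Q = fun s => sum_f_R0 (fun l => peval Q (x l) * peval (h l) s) N).
    { apply functional_extensionality. apply lagrange; auto.
      specialize (Hl j Hj). lia. }
    rewrite E, Titer_sum by (intro; apply poly_peval).
    apply sum_eq. intros l _. rewrite Hbr, HI. apply Rmult_comm.
  - intros Hk1 i j Hi Hj. subst k. rewrite Hbr. simpl.
    unfold Tf, Dmat. rewrite Hk by auto. ring.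
Qed.
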